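(* For any $1 \leq i \neq j \leq r$ and $1 \leq s \leq l$, the graph with vertex set $V_i \cup V_j$ whose edges are the edges of $\mathcal{H}(V_i,V_j)$ of color $m_s$ contains no $K_{2,2}$ (4-cycle).
   Context: Let $r \geq 2$ and $l \geq 1$ be integers and $q$ a power of an odd prime. Let $\alpha_1, \dots, \alpha_r$ be distinct elements of $\mathbb{F}_q$, and let $m_1, \dots, m_l$ be distinct elements of $\mathbb{F}_q^* = \mathbb{F}_q\setminus\{0\}$ such that $m_s(\alpha_k - \alpha_i) \neq m_t(\alpha_k - \alpha_j)$ whenever $1 \leq s,t \leq l$ and $i,j,k$ are distinct integers in $\{1,\dots,r\}$. For $1 \leq i \leq r$ let $V_i = \mathbb{F}_q \times \mathbb{F}_q \times \{i\}$. For $x,y \in \mathbb{F}_q$, $a \in \mathbb{F}_q^*$, $s \in \{1,\dots,l\}$ let \[ e(x,y,a,m_s) = \{(x + \alpha_i m_s a,\; y + \alpha_i m_s a^2,\; i) : 1 \leq i \leq r\}. \] $\mathcal{H}$ is the $r$-uniform hypergraph with vertex set $V_1 \cup \dots \cup V_r$ and edge set $\{e(x,y,a,m_s) : x,y \in \mathbb{F}_q,\ a \in \mathbb{F}_q^*,\ 1 \leq s \leq l\}$; it is linear, so any pair of vertices lies in at most one edge of $\mathcal{H}$. For $i \neq j$, $\mathcal{H}(V_i,V_j)$ is the bipartite graph with parts $V_i$ and $V_j$ in which $u \in V_i$ and $w \in V_j$ are adjacent iff $\{u,w\} \subseteq e$ for some edge $e$ of $\mathcal{H}$. An edge $\{u,w\}$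 of $\mathcal{H}(V_i,V_j)$ has color $m_s$ if the (unique) edge $e$ of $\mathcal{H}$ containing $\{u,w\}$ is of the form $e(x,y,a,m_s)$. *)

(* Defs.v *)
From HB Require Import structures.
From mathcomp Require Import all_boot all_order all_algebra all_field.
Set Implicit Arguments. Unset Strict Implicit. Unset Printing Implicit Defensive.
Import GRing.Theory.
Local Open Scope ring_scope.

(* The hyperedge e(x,y,a,ms) of H, restricted to its vertices in V_i:
   the point (x + alpha_i ms a, y + alpha_i ms a^2) of V_i = F_q x F_q x {i}. *)
Definition edge_pt (F : fieldType) (r : nat) (alpha : 'I_r -> F)
  (x y a ms : F) (i : 'I_r) : F * F :=
  (x + alpha i * ms * a, y + alpha i * ms * a ^+ 2).

Definition colored_adj (F : fieldType) (r : nat) (alpha : 'I_r -> F)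
  (ms : F) (i j : 'I_r) (u w : F * F) : Prop :=
  exists x y a : F, a != 0 /\ u = edge_pt alpha x y a ms i /\
                    w = edge_pt alpha x y a ms j.

Definition has_colored_K22 (F : fieldType) (r : nat) (alpha : 'I_r -> F)
  (ms : F) (i j : 'I_r) : Prop :=
  exists u1 u2 w1 w2 : F * F, u1 != u2 /\ w1 != w2 /\
    colored_adj alpha ms i j u1 w1 /\ colored_adj alpha ms i j u1 w2 /\
    colored_adj alpha ms i j u2 w1 /\ colored_adj alpha ms i j u2 w2.

(* Main.v *)
Require Import Defs.
From HB Require Import structures.
From mathcomp Require Import all_boot all_order all_algebra all_field.
Import GRing.Theory.
Local Open Scope ring_scope.
From mathcomp Require Import ring.

Lemma two_neq0 (F : finFieldType) (hodd : odd #|F|) : (2%:R : F) != 0.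
Proof.
apply/negP => h2.
have pc : (2%N \in [pchar F]) by rewrite inE /= (eqP h2).
have := card_pprimeChar pc.
rewrite /= => hc.
have h1 := finNzRing_gt1 F.
move: hodd h1; rewrite [#|F|]hc.
case: (logn _ _) => [|n]; first by [].
by rewrite expnS oddM.
Qed.

Theorem lemma3p7 (F : finFieldType) (hodd : odd #|F|)
  (r l : nat) (hr : (2 <= r)%N) (hl : (1 <= l)%N)
  (alpha : 'I_r -> F) (halpha : injective alpha)
  (m : 'I_l -> F) (hm : injective m) (hm0 : forall s, m s != 0)
  (hcond : forall (s t : 'I_l) (i j k : 'I_r), i != j -> j != k -> i != k ->
     m s * (alpha k - alpha i) != m t * (alpha k - alpha j))
  (i j : 'I_r) (hij : i != j) (s : 'I_l) :
  ~ has_colored_K22 alpha (m s) i j.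
Proof.
have hc : alpha j * m s - alpha i * m s != 0.
  by rewrite -mulrBl mulf_neq0 // subr_eq0; apply: contra hij => /eqP /halpha ->.
have h2 := @two_neq0 F hodd.
move=> [u1 [u2 [w1 [w2 [hu [hw [A1 [A2 [A3 A4]]]]]]]]].
move: hu hw A1 A2 A3 A4.
rewrite /colored_adj /edge_pt.
move: hc; move: (alpha i * m s) (alpha j * m s) => A B hc.
move=> hu hw [x1 [y1 [a1 [_ [E1 E2]]]]]; subst u1 w1.
move=> [x2 [y2 [a2 [_ [[p1 q1] ew2]]]]] [x3 [y3 [a3 [_ [eu2 [p2 q2]]]]]].
subst w2 u2.
move=> [x4 [y4 [a4 [_ [[p3 q3] [p4 q4]]]]]].
have E1 : (B - A) * (a1 - a2 - (a3 - a4)) = 0.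
  have -> : (B - A) * (a1 - a2 - (a3 - a4)) =
     ((x1 + B * a1) - (x3 + B * a3)) - ((x2 + B * a2) - (x4 + B * a4))
     - ((x1 + A * a1) - (x2 + A * a2)) + ((x3 + A * a3) - (x4 + A * a4)) by ring.
  rewrite p1 p2 p3 p4; ring.
have E2 : (B - A) * (a1 ^+ 2 - a2 ^+ 2 - (a3 ^+ 2 - a4 ^+ 2)) = 0.
  have -> : (B - A) * (a1 ^+ 2 - a2 ^+ 2 - (a3 ^+ 2 - a4 ^+ 2)) =
     ((y1 + B * a1 ^+ 2) - (y3 + B * a3 ^+ 2)) - ((y2 + B * a2 ^+ 2) - (y4 + B * a4 ^+ 2))
     - ((y1 + A * a1 ^+ 2) - (y2 + A * a2 ^+ 2)) + ((y3 + A * a3 ^+ 2) - (y4 + A * a4 ^+ 2)) by ring.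
  rewrite q1 q2 q3 q4; ring.
move/eqP: E1; rewrite mulf_eq0 (negbTE hc) /= => /eqP d1.
move/eqP: E2; rewrite mulf_eq0 (negbTE hc) /= => /eqP d2.
case: (eqVneq a1 a2) => h12.
  subst a2; move/eqP: hw; apply.
  have ex : x1 = x2 by apply: (addIr (A * a1)).
  have ey : y1 = y2 by apply: (addIr (A * a1 ^+ 2)).
  by rewrite ex ey.
have d3 : (a1 - a2) * (a1 + a2 - (a3 + a4)) = 0.
  have -> : (a1 - a2) * (a1 + a2 - (a3 + a4)) =
    (a1 ^+ 2 - a2 ^+ 2 - (a3 ^+ 2 - a4 ^+ 2)) - (a3 + a4) * (a1 - a2 - (a3 - a4)) by ring.
  by rewrite d1 d2 mulr0 subr0.
move/eqP: d3; rewrite mulf_eq0 subr_eq0 (negbTE h12) /= => /eqP d3.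
have d4 : 2%:R * (a1 - a3) = 0.
  have -> : 2%:R * (a1 - a3) = (a1 - a2 - (a3 - a4)) + (a1 + a2 - (a3 + a4)) by ring.
  by rewrite d1 d3 addr0.
move/eqP: d4; rewrite mulf_eq0 (negbTE h2) /= subr_eq0 => /eqP h13.
subst a3; move/eqP: hu; apply.
have ex : x1 = x3 by apply: (addIr (B * a1)).
have ey : y1 = y3 by apply: (addIr (B * a1 ^+ 2)).
by rewrite ex ey.
Qed.
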